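(* Let $m\ge1$ be real and $\varphi=\mathrm{id}+f\in\mathrm{diff}^m_b(\mathbb{R}^n)$. Then $\varphi\in\mathrm{Diff}^m_{\mathrm{ap}}(\mathbb{R}^n)$ if and only if the set $$\mathcal S_\varphi=\{\varphi_c\}_{c\in\mathbb{R}^n},\qquad \varphi_c(x)=x+f(x+c),$$ is precompact in $\mathrm{diff}^m_b(\mathbb{R}^n)$. In this case $\mathcal S_\varphi$ and its closure in $\mathrm{diff}^m_b(\mathbb{R}^n)$ are contained in $\mathrm{Diff}^m_{\mathrm{ap}}(\mathbb{R}^n)$.
   Context: For real $m\ge0$, $C^m_b(\mathbb{R}^n,\mathbb{R})$ is the standard Hölder space (bounded continuous derivatives up to order $[m]$, plus $(m-[m])$-Hölder continuity of the order-$[m]$ derivatives if $m\notin\mathbb{Z}$, with the standard norm). $c^m_b$ is the closure of $C^\infty_b=\bigcap_kC^k_b$ in $C^m_b$. For $f\in C^m_b$, $\mathcal S_f=\{f(\cdot+c)\}_{c\in\mathbb{R}^n}$, and $C^m_{\mathrm{ap}}=\{f\in C^m_b:\mathcal S_f\text{ precompact in }C^m_b\}$. Vector-valued spaces are componentwise. $\mathrm{diff}^m_b(\mathbb{R}^n)$ is the set of $\varphi=\mathrm{id}+f$ with $f\in c^m_b(\mathbb{R}^n,\mathbb{R}^n)$ and $\inf_x\det(I+[d_xf])>0$; $\mathrm{Diff}^m_{\mathrm{ap}}(\mathbb{R}^n)$ is the set of $\varphi=\mathrm{id}+f$ with $f\in C^m_{\mathrm{ap}}(\mathbb{R}^n,\mathbb{R}^n)$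 and $\inf_x\det(I+[d_xf])>0$. Both carry the topology of $f$ (as open subsets of $c^m_b(\mathbb{R}^n,\mathbb{R}^n)$, resp. $C^m_{\mathrm{ap}}(\mathbb{R}^n,\mathbb{R}^n)$, via $\varphi\mapsto\varphi-\mathrm{id}$). *)

(* Defs.v *)
From HB Require Import structures.
From mathcomp Require Import all_boot all_order all_algebra.
From mathcomp Require Import all_classical all_reals all_analysis.
Set Implicit Arguments. Unset Strict Implicit. Unset Printing Implicit Defensive.
Import Order.TTheory GRing.Theory Num.Theory.
Import numFieldNormedType.Exports.
Local Open Scope classical_set_scope.
Local Open Scope ring_scope.

Section HolderDefs.
Variables (R : realType) (n : nat).
Notation V := 'rV[R]_n.

Definition ev (i : 'I_n) : V := delta_mx 0 i.

Fixpoint pd (s : seq 'I_n) (f : V -> R) : V -> R :=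
  match s with
  | [::] => f
  | i :: s' => fun x => derive (pd s' f) x (ev i)
  end.

Definition ipart (m : R) : nat := Num.truncn m.
Definition fpart (m : R) : R := m - (ipart m)%:R.

Definition Creg (k : nat) (f : V -> R) : Prop :=
  (forall s : seq 'I_n, (size s < k)%N -> forall x i, derivable (pd s f) x (ev i)) /\
  (forall s : seq 'I_n, (size s <= k)%N -> continuous (pd s f)).

Definition supn (g : V -> R) : \bar R :=
  ereal_sup [set (`|g x|)%:E | x in [set: V]].

Definition holder (a : R) (g : V -> R) : \bar R :=
  ereal_sup [set (`|g xy.1 - g xy.2| / (`|xy.1 - xy.2| `^ a))%:E
            | xy in [set xy : V * V | xy.1 != xy.2]].

Definition Cnorm (m : R) (f : V -> R) : \bar R :=
  ((\sum_(j < (ipart m).+1) \sum_(t : j.-tuple 'I_n) supn (pd t f)) +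
   (if fpart m == 0%R then 0
    else \sum_(t : (ipart m).-tuple 'I_n) holder (fpart m) (pd t f)))%E.

Definition Cb (m : R) (f : V -> R) : Prop :=
  Creg (ipart m) f /\ (Cnorm m f < +oo)%E.

Definition distC (m : R) (f g : V -> R) : \bar R := Cnorm m (fun x => f x - g x).

Definition Cinf (f : V -> R) : Prop := forall k : nat, Cb k%:R f.

Definition closure_in (T : Type) (d : T -> T -> \bar R) (X S : set T) : set T :=
  [set g | X g /\ forall e : R, 0 < e -> exists s, S s /\ (d s g < e%:E)%E].

Definition rel_open (T : Type) (d : T -> T -> \bar R) (K U : set T) : Prop :=
  forall x, K x -> U x -> exists2 e : R, 0 < e &
    forall y, K y -> (d x y < e%:E)%E -> U y.

Definition compact_d (T : Type) (d : T -> T -> \bar R) (K : set T) : Prop :=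
  forall (I : Type) (U : I -> set T), (forall i, rel_open d K (U i)) ->
    K `<=` \bigcup_i U i ->
    exists F : set I, finite_set F /\ K `<=` \bigcup_(i in F) U i.

Definition precompact_in (T : Type) (d : T -> T -> \bar R) (X S : set T) : Prop :=
  S `<=` X /\ compact_d d (closure_in d X S).

Definition cb (m : R) (f : V -> R) : Prop :=
  Cb m f /\ forall e : R, 0 < e -> exists g, Cinf g /\ (distC m f g < e%:E)%E.

Definition transl (f : V -> R) : set (V -> R) := [set (fun x => f (x + c)) | c in [set: V]].

Definition Cap (m : R) (f : V -> R) : Prop :=
  Cb m f /\ precompact_in (distC m) (Cb m) (transl f).

Definition comp (j : 'I_n) (F : V -> V) : V -> R := fun x => F x 0 j.
Definition cbV (m : R) (F : V -> V) : Prop := forall j, cb m (comp j F).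
Definition CapV (m : R) (F : V -> V) : Prop := forall j, Cap m (comp j F).
Definition NormV (m : R) (F : V -> V) : \bar R := (\sum_(j < n) Cnorm m (comp j F))%E.

Definition jac (F : V -> V) (x : V) : 'M[R]_n :=
  \matrix_(i, j) derive (comp i F) x (ev j).

Definition detcond (F : V -> V) : Prop :=
  (0 < ereal_inf [set (\det (1%:M + jac F x))%:E | x in [set: V]])%E.

Definition dispf (phi : V -> V) : V -> V := fun x => phi x - x.

Definition diffb (m : R) : set (V -> V) :=
  [set phi | cbV m (dispf phi) /\ detcond (dispf phi)].
Definition Diffap (m : R) : set (V -> V) :=
  [set phi | CapV m (dispf phi) /\ detcond (dispf phi)].

Definition distD (m : R) (phi psi : V -> V) : \bar R :=
  NormV m (fun x => dispf phi x - dispf psi x).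

Definition Sphi (phi : V -> V) : set (V -> V) :=
  [set (fun x => x + dispf phi (x + c)) | c in [set: V]].

End HolderDefs.

(* Main.v *)
Require Import Defs.
From HB Require Import structures.
From mathcomp Require Import all_boot all_order all_algebra finmap.
From mathcomp Require Import all_classical all_reals all_analysis.
From mathcomp Require Import ring lra.
Require Import Defs.
Import Order.TTheory GRing.Theory Num.Theory.
Local Open Scope classical_set_scope.
Local Open Scope ring_scope.
Import numFieldNormedType.Exports.


Lemma invN_lt {R : realType} {e : R} : 0 < e -> exists N, forall k, (N <= k)%N -> k.+1%:R^-1 < e.
Proof.
move=> e0; exists (Num.truncn e^-1) => k Nk.
rewrite -[e]invrK ltf_pV2 ?posrE ?invr_gt0 ?ltr0n //.
apply: (lt_le_trans (truncnS_gt _)); by rewrite ler_nat ltnS.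
Qed.

Lemma inv_le {R : realType} (a b : nat) : (a <= b)%N -> b.+1%:R^-1 <= a.+1%:R^-1 :> R.
Proof. by move=> ab; rewrite lef_pV2 ?posrE ?ltr0n // ler_nat ltnS. Qed.

Lemma finnat_ub (A : set nat) : finite_set A -> exists M, forall k, A k -> (k <= M)%N.
Proof.
move=> /finite_fsetP[X ->]; exists (\max_(i <- X) i)%N => k kX.
exact: (leq_bigmax_seq (F := id) k kX isT).
Qed.

Section Gen.
Variables (R : realType) (T : Type) (d : T -> T -> \bar R) (K : set T).
Hypothesis H0 : forall x y, K x -> K y -> (0 <= d x y)%E.
Hypothesis Hxx : forall x, K x -> d x x = 0%E.
Hypothesis Hsym : forall x y, K x -> K y -> d x y = d y x.
Hypothesis Htri : forall x y z, K x -> K y -> K z -> (d x z <= d x y + d y z)%E.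

Definition cluster (x : nat -> T) (y : T) :=
  forall e : R, 0 < e -> forall N, exists k, (N <= k)%N /\ (d y (x k) < e%:E)%E.

Lemma tri_lt {x y z a b} : K x -> K y -> K z -> (d x y < a%:E)%E -> (d y z < b%:E)%E ->
  (d x z < (a + b)%:E)%E.
Proof.
move=> Kx Ky Kz h1 h2; apply: (le_lt_trans (Htri _ _ _ Kx Ky Kz)).
by rewrite EFinD; apply: lteD.
Qed.

Lemma SUB x y : cluster x y -> exists s : nat -> nat,
  (forall k, s k < s k.+1)%N /\ (forall k, k <= s k)%N /\
  forall k, (d y (x (s k)) < (k.+1%:R^-1)%:E)%E.
Proof.
move=> cy.
have hn : forall N, exists k, (N <= k)%N /\ (d y (x k) < (N.+1%:R^-1)%:E)%E.
  by move=> N; apply: cy; rewrite invr_gt0 ltr0n.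
have [nx Hnx] := choice hn.
pose s := fix s k := if k is k'.+1 then nx (s k' + k'.+1)%N else nx 0%N.
have sS k : s k.+1 = nx (s k + k.+1)%N by [].
exists s; split; [|split].
- move=> k; rewrite sS; apply: leq_trans (Hnx _).1; by rewrite addnS ltnS leq_addr.
- elim=> [|k IH] //; rewrite sS; apply: leq_trans (Hnx _).1; by rewrite leq_addl.
- case=> [|k]; first exact: (Hnx 0%N).2.
  rewrite sS; apply: lt_le_trans (Hnx _).2 _; rewrite lee_fin; apply: inv_le.
  by rewrite leq_addl.
Qed.

Lemma SC : (forall x, (forall k, K (x k)) -> exists y, K y /\ cluster x y) -> compact_d d K.
Proof.
move=> hseq I U Uo cov.
case: (pselect (exists x0, K x0)) => [[x0 Kx0]|nK]; last first.
  exists set0; split; first exact: finite_set0.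
  by move=> x Kx; exfalso; apply: nK; exists x.
have [del [del0 hdel]] : exists del : R, 0 < del /\ forall x, K x ->
    exists i, forall z, K z -> (d x z < del%:E)%E -> U i z.
  apply: contrapT => hL.
  have hx : forall k : nat, exists x, K x /\ forall i, exists z,
      K z /\ (d x z < (k.+1%:R^-1)%:E)%E /\ ~ U i z.
    move=> k; apply: contrapT => hk; apply: hL; exists (k.+1%:R^-1).
    split; first by rewrite invr_gt0 ltr0n.
    move=> x Kx; apply: contrapT => hi; apply: hk; exists x; split => // i.
    apply: contrapT => hz; apply: hi; exists i => z Kz dz.
    apply: contrapT => nU; apply: hz; by exists z.
  have [xs Hxs] := choice hx.
  have [y [Ky cy]] := hseq xs (fun k => (Hxs k).1).
  have [i _ Uiy] := cov y Ky.
  have [e e0 he] := Uo i y Ky Uiy.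
  have [N hN] := invN_lt (divr_gt0 e0 (ltr0Sn R 1)).
  have [k [Nk dk]] := cy (e/2) (divr_gt0 e0 (ltr0Sn R 1)) N.
  have [z [Kz [dz nU]]] := (Hxs k).2 i.
  apply: nU; apply: he => //.
  rewrite [e]splitr; apply: (tri_lt Ky (Hxs k).1 Kz dk).
  apply: lt_trans dz _; rewrite lte_fin; exact: hN.
have hL' : forall x, exists i, K x -> forall z, K z -> (d x z < del%:E)%E -> U i z.
  move=> x; case: (pselect (K x)) => Kx; first by have [i hi] := hdel x Kx; exists i.
  by have [i _ _] := cov x0 Kx0; exists i.
have [iota Hiota] := choice hL'.
apply: contrapT => hnf.
have hst : forall pk : (nat -> T) * nat, exists z,
    (forall j, (j < pk.2)%N -> K (pk.1 j)) ->
    K z /\ forall j, (j < pk.2)%N -> ~ U (iota (pk.1 j)) z.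
  case=> p k /=; case: (pselect (forall j, (j < k)%N -> K (p j))) => hK; last first.
    by exists x0.
  have fF : finite_set [set iota (p j) | j in `I_k] by apply: finite_image; exact: finite_II.
  have : ~ (K `<=` \bigcup_(i in [set iota (p j) | j in `I_k]) U i).
    by move=> hc; apply: hnf; exists [set iota (p j) | j in `I_k].
  move=> /existsNP[z /not_implyP[Kz nz]]; exists z => _; split => // j jk Uz.
  apply: nz; exists (iota (p j)) => //; by exists j.
have [st Hst] := choice hst.
pose S := fix S k := if k is k'.+1 then (fun j => if (j < k')%N then S k' j else st (S k', k'))
   else (fun _ : nat => x0).
pose xs k := st (S k, k).
have SE : forall k j, (j < k)%N -> S k j = xs j.
  elim=> [|k IH] j //= jk; case: ltnP => jk'; first exact: IH.
  by have -> : j = k by apply/eqP; rewrite eqn_leq jk'; rewrite ltnS in jk; rewrite jk.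
have Kxs : forall k j, (j < k)%N -> K (xs j).
  elim=> [|k IH] j // jk; rewrite ltnS leq_eqVlt in jk; case/orP: jk => [/eqP ->|]; last exact: IH.
  have hk : forall j', (j' < k)%N -> K (S k j') by move=> j' j'k; rewrite SE //; exact: IH.
  exact: (Hst (S k, k) hk).1.
have sep : forall j k, (j < k)%N -> ~ (d (xs j) (xs k) < del%:E)%E.
  move=> j k jk dj.
  have hk : forall j', (j' < k)%N -> K (S k j') by move=> j' j'k; rewrite SE //; exact: Kxs j'k.
  have [_ h] := Hst (S k, k) hk.
  apply: (h j jk) => /=; rewrite SE //; apply: (Hiota (xs j) (Kxs _ _ (ltnSn j))) => //.
  exact: (Kxs _ _ (ltnSn k)).
have Kx' : forall k, K (xs k) by move=> k; exact: (Kxs _ _ (ltnSn k)).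
have [y [Ky cy]] := hseq xs Kx'.
have [k1 [_ d1]] := cy (del/2) (divr_gt0 del0 (ltr0Sn R 1)) 0%N.
have [k2 [k12 d2]] := cy (del/2) (divr_gt0 del0 (ltr0Sn R 1)) k1.+1.
apply: (sep k1 k2 k12); rewrite [del]splitr; apply: (tri_lt (Kx' k1) Ky (Kx' k2)) => //.
by rewrite Hsym.
Qed.
Lemma tri_le_lt x y z a b : K x -> K y -> K z -> (d x y <= a%:E)%E -> (d y z < b%:E)%E ->
  (d x z < (a + b)%:E)%E.
Proof.
move=> Kx Ky Kz h1 h2; apply: (le_lt_trans (Htri _ _ _ Kx Ky Kz)).
rewrite EFinD; apply: lee_ltD => //.
by rewrite ge0_fin_numE ?H0 // (le_lt_trans h1) ?ltry.
Qed.

Lemma CS : compact_d d K -> forall x : nat -> T, (forall k, K (x k)) ->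
  exists y, K y /\ cluster x y.
Proof.
move=> cK x Kx; apply: contrapT => hno.
have hy : forall y, exists p : R * nat, K y ->
    0 < p.1 /\ forall k, (p.2 <= k)%N -> ~ (d y (x k) < p.1%:E)%E.
  move=> y; case: (pselect (K y)) => Ky; last by exists (0, 0%N).
  have : ~ cluster x y by move=> cy; apply: hno; exists y.
  move=> /existsNP[e /not_implyP[e0 /existsNP[N hN]]].
  exists (e, N) => _; split => // k Nk dk; apply: hN; by exists k.
have [p Hp] := choice hy.
pose U y := [set z | K y /\ (d y z < (p y).1%:E)%E].
have [] := cK _ U.
- move=> y z Kz [Ky dyz]; have [p0 _] := Hp y Ky.
  have fz : d y z \is a fin_num by rewrite ge0_fin_numE ?H0 // (lt_trans dyz) ?ltry.
  exists ((p y).1 - fine (d y z)); first by rewrite subr_gt0 -lte_fin fineK.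
  move=> w Kw dzw; split => //.
  have := tri_le_lt _ _ _ _ _ Ky Kz Kw (_ : d y z <= (fine (d y z))%:E)%E dzw.
  by rewrite addrCA subrr addr0; apply; rewrite fineK.
- move=> y Ky; exists y => //; split => //; rewrite Hxx //; have [] := Hp y Ky.
  by rewrite lte_fin.
move=> F [fF cov].
have [M hM] := finnat_ub _ (finite_image (fun y => (p y).2) fF).
have [y Fy [Ky dy]] := cov _ (Kx M).
have [_ h] := Hp y Ky; apply: (h M) => //; apply: hM; by exists y.
Qed.

End Gen.


Section Spec.
Variables (R : realType) (n : nat).
Local Notation V := 'rV[R]_n.

Lemma derive_tr (g : V -> R) (c a v : V) :
  derive (fun x => g (x + c)) a v = derive g (a + c) v.
Proof.
rewrite /derive; suff -> : (fun x => g (x + c)) \o shift a = g \o shift (a + c) by []. by apply: funext => x /=; rewrite addrA.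
Qed.

Lemma derivable_tr (g : V -> R) (c a v : V) :
  derivable (fun x => g (x + c)) a v = derivable g (a + c) v.
Proof.
rewrite /derivable; suff -> : (fun x => g (x + c)) \o shift a = g \o shift (a + c) by []. by apply: funext => x /=; rewrite addrA.
Qed.

Lemma pd_tr s (h : V -> R) (c : V) :
  pd s (fun x => h (x + c)) = fun x => pd s h (x + c).
Proof.
elim: s => [|i s IH] //=; apply: funext => x; by rewrite IH derive_tr.
Qed.

Lemma cont_tr (g : V -> R) (c : V) : continuous g -> continuous (fun x : V => g (x + c)).
Proof.
move=> cg x; apply: continuous_comp; last exact: cg.
exact: (@cvgD _ _ _ (nbhs x) _ id (fun _ => c) x c cvg_id (cvg_cst c)).
Qed.

Lemma Creg_tr k (h : V -> R) c : Creg k h -> Creg k (fun x => h (x + c)).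
Proof.
move=> [h1 h2]; split => s hs.
- by move=> x i; rewrite pd_tr derivable_tr; apply: h1.
- by rewrite pd_tr; apply: cont_tr; apply: h2.
Qed.

Lemma supn_tr (g : V -> R) c : supn (fun x => g (x + c)) = supn g.
Proof.
rewrite /supn; congr ereal_sup; apply/seteqP; split => _ [x _ <-].
- by exists (x + c).
- by exists (x - c) => //; rewrite subrK.
Qed.

Lemma subD2 (x y c : V) : (x + c) - (y + c) = x - y.
Proof. by rewrite opprD addrACA subrr addr0. Qed.

Lemma holder_tr a (g : V -> R) c : holder a (fun x => g (x + c)) = holder a g.
Proof.
rewrite /holder; congr ereal_sup; apply/seteqP; split => _ [[x y] /= xy <-].
- exists (x + c, y + c) => /=; last by rewrite subD2.
  by apply: contra xy => /eqP/addIr ->.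
- exists (x - c, y - c) => /=; last by rewrite !subrK subD2.
  by apply: contra xy => /eqP/addIr ->.
Qed.

Lemma Cnorm_tr m (h : V -> R) c : Cnorm m (fun x => h (x + c)) = Cnorm m h.
Proof.
rewrite /Cnorm; congr (_ + _)%E.
- apply: eq_bigr => j _; apply: eq_bigr => t _; by rewrite pd_tr supn_tr.
- case: ifP => // _; apply: eq_bigr => t _; by rewrite pd_tr holder_tr.
Qed.

Lemma Cb_tr m (h : V -> R) c : Cb m h -> Cb m (fun x => h (x + c)).
Proof. by move=> [h1 h2]; split; [apply: Creg_tr | rewrite Cnorm_tr]. Qed.

Lemma Cinf_tr (h : V -> R) c : Cinf h -> Cinf (fun x => h (x + c)).
Proof. by move=> h1 k; apply: Cb_tr. Qed.

Lemma cb_tr m (h : V -> R) c : cb m h -> cb m (fun x => h (x + c)).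
Proof.
move=> [h1 h2]; split; first exact: Cb_tr.
move=> e e0; have [g [g1 g2]] := h2 e e0; exists (fun x => g (x + c)); split.
  exact: Cinf_tr.
by rewrite /distC (Cnorm_tr m (fun x => h x - g x)).
Qed.

Lemma transl_tr (h : V -> R) c : transl (fun x => h (x + c)) = transl h.
Proof.
apply/seteqP; split => _ [b _ <-].
- exists (b + c) => //; apply: funext => x; by rewrite addrA.
- exists (b - c) => //; apply: funext => x; by rewrite -addrA subrK.
Qed.

Definition phic (phi : V -> V) c := fun x => x + dispf phi (x + c).

Lemma dispf_phic phi c : dispf (phic phi c) = fun x => dispf phi (x + c).
Proof. apply: funext => x; by rewrite /dispf /phic addrAC subrr add0r. Qed.

Lemma jac_tr (F : V -> V) c x : jac (fun x => F (x + c)) x = jac F (x + c).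
Proof. apply/matrixP => i j; rewrite !mxE; exact: derive_tr. Qed.

Lemma detcond_tr (F : V -> V) c : detcond F -> detcond (fun x => F (x + c)).
Proof.
rewrite /detcond; suff -> : [set (\det (1%:M + jac (fun x => F (x + c)) x))%:E | x in [set: V]]
  = [set (\det (1%:M + jac F x))%:E | x in [set: V]] by [].
apply/seteqP; split => _ [x _ <-].
- by exists (x + c) => //; rewrite jac_tr.
- by exists (x - c) => //; rewrite jac_tr subrK.
Qed.

Lemma diffb_tr m phi c : diffb m phi -> diffb m (phic phi c).
Proof.
move=> [h1 h2]; rewrite /diffb /= dispf_phic; split; last exact: detcond_tr.
move=> j; have := cb_tr _ _ c (h1 j); by rewrite /comp.
Qed.

Lemma Diffap_tr m phi c : Diffap m phi -> Diffap m (phic phi c).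
Proof.
move=> [h1 h2]; rewrite /Diffap /= dispf_phic; split; last exact: detcond_tr.
move=> j; have [a1 a2] := h1 j; split; first exact: (Cb_tr _ _ c a1).
by rewrite /comp (transl_tr (fun x => dispf phi x 0 j)).
Qed.
End Spec.


Section Met.
Variables (R : realType) (n : nat) (m : R).
Hypothesis m1 : 1 <= m.
Local Notation V := 'rV[R]_n.

Lemma ipart_ge1 : (0 < ipart m)%N.
Proof. by rewrite /ipart truncn_ge_nat ?(le_trans ler01 m1). Qed.

Lemma supn_ge0 (g : V -> R) : (0 <= supn g)%E.
Proof.
apply: le_trans (_ : (`|g 0|%:E <= _)%E); first by rewrite lee_fin.
by apply: ereal_sup_ubound; exists 0.
Qed.

Lemma ev_neq0 (i : 'I_n) : (0 : V) != @ev R n i.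
Proof.
apply/eqP => /matrixP/(_ 0 i); rewrite !mxE !eqxx /= => /eqP.
by rewrite eq_sym oner_eq0.
Qed.

Lemma holder_ge0 a (g : V -> R) (i : 'I_n) : (0 <= holder a g)%E.
Proof.
apply: le_trans (ereal_sup_ubound _); last first.
  by exists (0, @ev R n i) => //=; exact: ev_neq0.
by rewrite lee_fin divr_ge0 // powR_ge0.
Qed.

Lemma Cnorm_ge0 (h : V -> R) : (0 <= Cnorm m h)%E.
Proof.
rewrite /Cnorm; apply: adde_ge0.
  apply: sume_ge0 => j _; apply: sume_ge0 => t _; exact: supn_ge0.
case: ifP => _ //; apply: sume_ge0 => t _.
exact: (holder_ge0 _ _ (tnth t (Ordinal ipart_ge1))).
Qed.

Lemma pd_sub {k} {f g : V -> R} : Creg k f -> Creg k g -> forall s, (size s <= k)%N ->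
  pd s (fun x => (f x - g x)%R) = fun x => pd s f x - pd s g x.
Proof.
move=> [f1 _] [g1 _]; elim=> [|i s IH] //= hs; apply: funext => x.
rewrite IH ?(ltnW hs) //.
exact: (deriveB (f1 s hs x i) (g1 s hs x i)).
Qed.

Lemma Cnorm_le (F1 F2 F3 : V -> R) :
  (forall s, (size s <= ipart m)%N -> (supn (pd s F1) <= supn (pd s F2) + supn (pd s F3))%E) ->
  (forall s, (size s <= ipart m)%N ->
     (holder (fpart m) (pd s F1) <= holder (fpart m) (pd s F2) + holder (fpart m) (pd s F3))%E) ->
  (Cnorm m F1 <= Cnorm m F2 + Cnorm m F3)%E.
Proof.
move=> Hs Hh; rewrite /Cnorm addeACA; apply: leeD.
- rewrite -big_split; apply: lee_sum => j _; rewrite -big_split; apply: lee_sum => t _.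
  by apply: Hs; rewrite size_tuple -ltnS.
- case: ifP => _; first by rewrite adde0.
  rewrite -big_split; apply: lee_sum => t _; by apply: Hh; rewrite size_tuple.
Qed.

Lemma Cnorm_eq (F1 F2 : V -> R) :
  (forall s, (size s <= ipart m)%N -> supn (pd s F1) = supn (pd s F2)) ->
  (forall s, (size s <= ipart m)%N -> holder (fpart m) (pd s F1) = holder (fpart m) (pd s F2)) ->
  Cnorm m F1 = Cnorm m F2.
Proof.
move=> Hs Hh; rewrite /Cnorm; congr (_ + _)%E.
- apply: eq_bigr => j _; apply: eq_bigr => t _; by apply: Hs; rewrite size_tuple -ltnS.
- case: ifP => // _; apply: eq_bigr => t _; by apply: Hh; rewrite size_tuple.
Qed.

Lemma Cnorm_le0 (F1 : V -> R) :
  (forall s, (size s <= ipart m)%N -> (supn (pd s F1) <= 0)%E) ->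
  (forall s, (size s <= ipart m)%N -> (holder (fpart m) (pd s F1) <= 0)%E) ->
  (Cnorm m F1 <= 0)%E.
Proof.
move=> Hs Hh; rewrite /Cnorm; apply: (@le_trans _ _ (0 + 0)%E); last by rewrite adde0.
apply: leeD.
- apply: sume_le0 => j _; apply: sume_le0 => t _; by apply: Hs; rewrite size_tuple -ltnS.
- case: ifP => // _; apply: sume_le0 => t _; by apply: Hh; rewrite size_tuple.
Qed.

Lemma supn_tri (a b c : V -> R) :
  (supn (fun x => (a x - c x)%R) <= supn (fun x => (a x - b x)%R) + supn (fun x => (b x - c x)%R))%E.
Proof.
apply: ge_ereal_sup => _ [x _ <-].
apply: le_trans (_ : (`|a x - b x|%:E + `|b x - c x|%:E <= _)%E); last first.
  by apply: leeD; apply: ereal_sup_ubound; exists x.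
rewrite -EFinD lee_fin; apply: le_trans (ler_normD _ _); by rewrite addrA subrK.
Qed.

Lemma holder_tri al (a b c : V -> R) :
  (holder al (fun x => (a x - c x)%R) <= holder al (fun x => (a x - b x)%R) + holder al (fun x => (b x - c x)%R))%E.
Proof.
apply: ge_ereal_sup => _ [[x y] /= xy <-].
apply: le_trans (_ : ((`|(a x - b x) - (a y - b y)| / (`|x - y| `^ al))%:E +
   (`|(b x - c x) - (b y - c y)| / (`|x - y| `^ al))%:E <= _)%E); last first.
  by apply: leeD; apply: ereal_sup_ubound; exists (x, y).
rewrite -EFinD lee_fin -mulrDl ler_wpM2r ?invr_ge0 ?powR_ge0 //.
apply: le_trans (ler_normD _ _); rewrite le_eqVlt; apply/orP; left; apply/eqP; congr `|_|; ring.
Qed.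

Lemma supn_sym (a b : V -> R) : supn (fun x => (a x - b x)%R) = supn (fun x => (b x - a x)%R).
Proof.
rewrite /supn; congr ereal_sup; apply/seteqP; split => _ [x _ <-]; exists x => //; by rewrite distrC.
Qed.

Lemma holder_sym al (a b : V -> R) : holder al (fun x => (a x - b x)%R) = holder al (fun x => (b x - a x)%R).
Proof.
rewrite /holder; congr ereal_sup; apply/seteqP; split => _ [[x y] /= xy <-]; exists (x, y) => //=;
  congr ((_ / _)%:E); rewrite -normrN; congr `|_|; ring.
Qed.

Lemma supn_self (a : V -> R) : (supn (fun x => (a x - a x)%R) <= 0)%E.
Proof. apply: ge_ereal_sup => _ [x _ <-]; by rewrite subrr normr0. Qed.

Lemma holder_self al (a : V -> R) : (holder al (fun x => (a x - a x)%R) <= 0)%E.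
Proof. apply: ge_ereal_sup => _ [[x y] /= xy <-]; by rewrite !subrr normr0 mul0r. Qed.

Let k := ipart m.

Lemma Cnorm_tri (f g h : V -> R) : Creg k f -> Creg k g -> Creg k h ->
  (distC m f h <= distC m f g + distC m g h)%E.
Proof.
move=> cf cg ch; apply: Cnorm_le => s hs;
  rewrite (pd_sub cf ch _ hs) (pd_sub cf cg _ hs) (pd_sub cg ch _ hs).
  exact: supn_tri.
exact: holder_tri.
Qed.

Lemma Cnorm_sym (f g : V -> R) : Creg k f -> Creg k g -> distC m f g = distC m g f.
Proof.
move=> cf cg; apply: Cnorm_eq => s hs; rewrite (pd_sub cf cg _ hs) (pd_sub cg cf _ hs).
  exact: supn_sym.
exact: holder_sym.
Qed.

Lemma Cnorm_self (f : V -> R) : Creg k f -> distC m f f = 0%E.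
Proof.
move=> cf; apply/eqP; rewrite eq_le Cnorm_ge0 andbT; apply: Cnorm_le0 => s hs;
  rewrite (pd_sub cf cf _ hs); [exact: supn_self | exact: holder_self].
Qed.

Lemma Cnorm_ge0' (f g : V -> R) : (0 <= distC m f g)%E.
Proof. exact: Cnorm_ge0. Qed.

End Met.


Section Det.
Variable R : realType.

Lemma cvg_bsum (I : Type) (r : seq I) (P : pred I) (F : nat -> I -> R) (G : I -> R) :
  (forall i, F ^~ i @ \oo --> G i) ->
  (fun k => \sum_(i <- r | P i) F k i) @ \oo --> \sum_(i <- r | P i) G i.
Proof.
move=> h; elim: r => [|a r IH].
  have -> : (fun k => \sum_(i <- [::] | P i) F k i) = fun _ => 0.
    by apply: funext => k; rewrite big_nil.
  rewrite big_nil; exact: cvg_cst.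
have -> : (fun k => \sum_(i <- a :: r | P i) F k i) =
   fun k => (if P a then F k a else 0) + \sum_(i <- r | P i) F k i.
  by apply: funext => k; rewrite big_cons; case: (P a); rewrite ?add0r.
have -> : \sum_(i <- a :: r | P i) G i = (if P a then G a else 0) + \sum_(i <- r | P i) G i.
  by rewrite big_cons; case: (P a); rewrite ?add0r.
apply: cvgD => //; case: (P a); [exact: h | exact: cvg_cst].
Qed.

Lemma cvg_bprod (I : Type) (r : seq I) (F : nat -> I -> R) (G : I -> R) :
  (forall i, F ^~ i @ \oo --> G i) ->
  (fun k => \prod_(i <- r) F k i) @ \oo --> \prod_(i <- r) G i.
Proof.
move=> h; elim: r => [|a r IH].
  have -> : (fun k => \prod_(i <- [::]) F k i) = fun _ => 1.
    by apply: funext => k; rewrite big_nil.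
  rewrite big_nil; exact: cvg_cst.
have -> : (fun k => \prod_(i <- a :: r) F k i) =
   fun k => F k a * \prod_(i <- r) F k i.
  by apply: funext => k; rewrite big_cons.
rewrite big_cons; exact: cvgM.
Qed.

Lemma cvg_det n (A : nat -> 'M[R]_n) (B : 'M[R]_n) :
  (forall i j, (fun k => A k i j) @ \oo --> B i j) ->
  (fun k => \det (A k)) @ \oo --> \det B.
Proof.
move=> h; rewrite /determinant; apply: cvg_bsum => s.
apply: cvgM; first exact: cvg_cst.
apply: cvg_bprod => i; exact: h.
Qed.
End Det.


Lemma smono (s : nat -> nat) : (forall k, s k < s k.+1)%N -> forall a b, (a < b)%N -> (s a < s b)%N.
Proof.
move=> h a; elim=> [//|b IH]; rewrite ltnS leq_eqVlt => /orP[/eqP->|/IH H]; first exact: h.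
exact: ltn_trans H (h b).
Qed.

Section Main.
Variables (R : realType) (n : nat) (m : R).
Hypothesis m1 : 1 <= m.
Local Notation V := 'rV[R]_n.
Local Notation k0 := (ipart m).

Definition P (j : 'I_n) (psi : V -> V) : V -> R := comp j (dispf psi).
Definition DS := [set psi : V -> V | forall j, Creg k0 (P j psi)].

Lemma dC_ge0 (f g : V -> R) : (0 <= distC m f g)%E.
Proof. exact: (@Cnorm_ge0 R n m m1). Qed.
Lemma dC_self (f : V -> R) : Creg k0 f -> distC m f f = 0%E.
Proof. exact: (@Cnorm_self R n m m1 f). Qed.
Lemma dC_sym (f g : V -> R) : Creg k0 f -> Creg k0 g -> distC m f g = distC m g f.
Proof. exact: (@Cnorm_sym R n m f g). Qed.
Lemma dC_tri (f g h : V -> R) : Creg k0 f -> Creg k0 g -> Creg k0 h ->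
  (distC m f h <= distC m f g + distC m g h)%E.
Proof. exact: (@Cnorm_tri R n m f g h). Qed.

Lemma distD_E (psi chi : V -> V) :
  distD m psi chi = (\sum_(j < n) distC m (P j psi) (P j chi))%E.
Proof.
rewrite /distD /NormV; apply: eq_bigr => j _; rewrite /distC /comp /P /comp.
by congr Cnorm; apply: funext => x; rewrite !mxE.
Qed.

Lemma dD_ge0 (psi chi : V -> V) : (0 <= distD m psi chi)%E.
Proof. rewrite distD_E; apply: sume_ge0 => j _; exact: dC_ge0. Qed.
Lemma dD_self psi : DS psi -> distD m psi psi = 0%E.
Proof. by move=> D; rewrite distD_E big1 // => j _; exact: dC_self. Qed.
Lemma dD_sym psi chi : DS psi -> DS chi -> distD m psi chi = distD m chi psi.
Proof. by move=> D1 D2; rewrite !distD_E; apply: eq_bigr => j _; exact: dC_sym. Qed.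
Lemma dD_tri psi chi xi : DS psi -> DS chi -> DS xi ->
  (distD m psi xi <= distD m psi chi + distD m chi xi)%E.
Proof.
move=> D1 D2 D3; rewrite !distD_E.
apply: le_trans (_ : _ <= \sum_(j < n) (distC m (P j psi) (P j chi) + distC m (P j chi) (P j xi)))%E _.
  by apply: lee_sum => j _; exact: dC_tri.
by rewrite big_split.
Qed.
Lemma dD_comp psi chi j : (distC m (P j psi) (P j chi) <= distD m psi chi)%E.
Proof.
rewrite distD_E (bigD1 j) //=; apply: leeDl; apply: sume_ge0 => i _; exact: dC_ge0.
Qed.

Lemma CS_C (S : set (V -> R)) : S `<=` Creg k0 -> compact_d (distC m) S ->
  forall x, (forall k, S (x k)) -> exists y, S y /\ cluster R _ (distC m) x y.
Proof.
move=> hS; apply: CS => [x y _ _|x Sx|x y z Sx Sy Sz]; first exact: dC_ge0.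
  exact: dC_self (hS _ Sx).
exact: dC_tri (hS _ Sx) (hS _ Sy) (hS _ Sz).
Qed.

Lemma SC_C (S : set (V -> R)) : S `<=` Creg k0 ->
  (forall x, (forall k, S (x k)) -> exists y, S y /\ cluster R _ (distC m) x y) ->
  compact_d (distC m) S.
Proof.
move=> hS; apply: SC => [x y Sx Sy|x y z Sx Sy Sz].
  exact: dC_sym (hS _ Sx) (hS _ Sy).
exact: dC_tri (hS _ Sx) (hS _ Sy) (hS _ Sz).
Qed.

Lemma CS_D (S : set (V -> V)) : S `<=` DS -> compact_d (distD m) S ->
  forall x, (forall k, S (x k)) -> exists y, S y /\ cluster R _ (distD m) x y.
Proof.
move=> hS; apply: CS => [x y _ _|x Sx|x y z Sx Sy Sz]; first exact: dD_ge0.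
  exact: dD_self (hS _ Sx).
exact: dD_tri (hS _ Sx) (hS _ Sy) (hS _ Sz).
Qed.

Lemma SC_D (S : set (V -> V)) : S `<=` DS ->
  (forall x, (forall k, S (x k)) -> exists y, S y /\ cluster R _ (distD m) x y) ->
  compact_d (distD m) S.
Proof.
move=> hS; apply: SC => [x y Sx Sy|x y z Sx Sy Sz].
  exact: dD_sym (hS _ Sx) (hS _ Sy).
exact: dD_tri (hS _ Sx) (hS _ Sy) (hS _ Sz).
Qed.

Lemma k0_ge1 : (1 <= k0)%N.
Proof. exact: (@ipart_ge1 R m m1). Qed.

Lemma supn_le_Cnorm (h : V -> R) s : (size s <= k0)%N -> (supn (pd s h) <= Cnorm m h)%E.
Proof.
move=> hs; rewrite /Cnorm.
have H2 : (0 <= (if fpart m == 0%R then 0 else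
    \sum_(t : k0.-tuple 'I_n) holder (fpart m) (pd t h)))%E.
  case: ifP => _ //; apply: sume_ge0 => t _.
  exact: (holder_ge0 _ _ _ _ (tnth t (Ordinal k0_ge1))).
apply: le_trans (leeDl _ H2).
have j0 : (size s < k0.+1)%N by [].
rewrite (bigD1 (Ordinal j0)) //=.
apply: le_trans (leeDl _ _); last first.
  by apply: sume_ge0 => j _; apply: sume_ge0 => t _; exact: supn_ge0.
rewrite (bigD1 (in_tuple s : (Ordinal j0).-tuple 'I_n)) //=.
apply: leeDl; apply: sume_ge0 => t _; exact: supn_ge0.
Qed.

Lemma der_bound (a b : V -> R) (i : 'I_n) x : Creg k0 a -> Creg k0 b ->
  (`|derive a x (ev R i) - derive b x (ev R i)|%:E <= distC m a b)%E.
Proof.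
move=> ca cb.
have E := @pd_sub R n k0 a b ca cb [:: i] k0_ge1.
have -> : derive a x (ev R i) - derive b x (ev R i) = pd [:: i] (fun y => a y - b y) x.
  by rewrite E.
apply: le_trans (supn_le_Cnorm (fun y => a y - b y) [:: i] k0_ge1).
by apply: ereal_sup_ubound; exists x.
Qed.

Variable phi : V -> V.
Hypothesis hphi : diffb m phi.
Local Notation phc := (@phic R n phi).

Local Notation KK := (closure_in (distD m) (diffb m) (Sphi phi)).
Local Notation Kj j := (closure_in (distC m) (Cb m) (transl (P j phi))).

Lemma P_phic j c : P j (phc c) = fun x => P j phi (x + c).
Proof. by rewrite /P dispf_phic. Qed.

Lemma diffb_DS psi : diffb m psi -> DS psi.
Proof. by move=> h j; exact: (h.1 j).1.1. Qed.

Lemma DS_phic c : DS (phc c).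
Proof. apply: diffb_DS; exact: diffb_tr. Qed.

Lemma Sphi_diffb : Sphi phi `<=` diffb m.
Proof. move=> _ [c _ <-]; exact: diffb_tr. Qed.

Lemma Sphi_K : Sphi phi `<=` KK.
Proof.
move=> _ [c _ <-]; split; first exact: diffb_tr.
move=> e e0; exists (phc c); split; first by exists c.
by rewrite dD_self ?lte_fin //; exact: DS_phic.
Qed.

Lemma K_DS : KK `<=` DS.
Proof. by move=> psi [h _]; exact: diffb_DS. Qed.

Lemma Kj_Creg j : Kj j `<=` Creg k0.
Proof. by move=> g [[h _] _]. Qed.

Lemma K_comp j psi : KK psi -> Kj j (P j psi).
Proof.
move=> [dpsi cl]; split; first exact: (dpsi.1 j).1.
move=> e e0; have [_ [[c _ <-] hc]] := cl e e0.
exists (fun x => P j phi (x + c)); split; first by exists c.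
rewrite -P_phic; exact: le_lt_trans (dD_comp _ _ j) hc.
Qed.

Lemma ent (F : V -> V) x i j :
  (1%:M + jac F x) i j = (i == j)%:R + derive (comp i F) x (ev R j).
Proof. by rewrite !mxE. Qed.

Lemma DET psi : DS psi -> (forall e : R, 0 < e -> exists c, (distD m (phc c) psi < e%:E)%E) ->
  detcond (dispf psi).
Proof.
move=> Dpsi cl.
have [r [r0 hr]] : exists r : R, 0 < r /\ forall y, r <= \det (1%:M + jac (dispf phi) y).
  have := hphi.2; rewrite /detcond.
  case E: (ereal_inf _) => [r'| |] //.
  - rewrite lte_fin => r0; exists r'; split => // y; rewrite -lee_fin -E.
    by apply: ereal_inf_lbound; exists y.
  - move=> _; exfalso.
    have := @ereal_inf_lbound R [set (\det (1%:M + jac (dispf phi) x))%:E | x in [set: V]]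
      (\det (1%:M + jac (dispf phi) 0))%:E (ex_intro2 _ _ 0 I erefl).
    by rewrite E leye_eq.
rewrite /detcond; apply: lt_le_trans (_ : (0 < r%:E)%E) _; first by rewrite lte_fin.
apply: le_ereal_inf_tmp => _ [x _ <-]; rewrite lee_fin.
have hc : forall k : nat, exists c, (distD m (phc c) psi < (k.+1%:R^-1)%:E)%E.
  by move=> k; apply: cl; rewrite invr_gt0 ltr0n.
have [cs Hcs] := choice hc.
have cu : (fun k => \det (1%:M + jac (dispf (phc (cs k))) x)) @ \oo -->
    \det (1%:M + jac (dispf psi) x).
  apply: cvg_det => i j.
  have -> : (fun k => (1%:M + jac (dispf (phc (cs k))) x) i j) =
     fun k => (i == j)%:R + derive (P i (phc (cs k))) x (ev R j).
    by apply: funext => k; rewrite ent.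
  rewrite ent; apply: cvgD; first exact: cvg_cst.
  apply/cvgrPdist_lt => e e0; have [N hN] := invN_lt e0; exists N => // k /= Nk.
  rewrite -lte_fin; apply: le_lt_trans (der_bound _ _ _ _ (Dpsi i) (DS_phic (cs k) i)) _.
  rewrite (dC_sym _ _ (Dpsi i) (DS_phic (cs k) i)).
  apply: le_lt_trans (dD_comp _ _ i) _; apply: lt_trans (Hcs k) _.
  by rewrite lte_fin; exact: hN.
apply: (closed_cvg (fun y => r <= y) (@closed_ge _ r) _ _ cu).
apply: nearW => k /=; rewrite dispf_phic jac_tr; exact: hr.
Qed.

Lemma Kj_compact j : compact_d (distD m) KK -> compact_d (distC m) (Kj j).
Proof.
move=> cK; apply: SC_C; first exact: Kj_Creg.
move=> a Ka.
have hc : forall k, exists c,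
    (distC m (fun x => P j phi (x + c)) (a k) < (k.+1%:R^-1)%:E)%E.
  move=> k; have k0' : 0 < k.+1%:R^-1 :> R by rewrite invr_gt0 ltr0n.
  have [_ [[c _ <-] h]] := (Ka k).2 _ k0'.
  by exists c.
have [cs Hcs] := choice hc.
have [y [Ky cy]] := CS_D _ K_DS cK (fun k => phc (cs k))
   (fun k => Sphi_K _ (ex_intro2 _ _ (cs k) I erefl)).
exists (P j y); split; first exact: K_comp.
move=> e e0 N.
have e20 : 0 < e / 2 by rewrite divr_gt0.
have [N0 hN0] := invN_lt e20.
have [k [Nk dk]] := cy (e/2) e20 (maxn N N0).
exists k; split; first by apply: leq_trans Nk; rewrite leq_maxl.
rewrite [e]splitr.
apply: le_lt_trans (dC_tri _ _ _ (K_DS _ Ky j) (DS_phic (cs k) j) (Kj_Creg j _ (Ka k))) _.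
rewrite EFinD; apply: lteD; first exact: le_lt_trans (dD_comp _ _ j) dk.
rewrite P_phic; apply: lt_trans (Hcs k) _; rewrite lte_fin; apply: hN0.
by apply: leq_trans Nk; rewrite leq_maxr.
Qed.


Lemma Cinf_Creg (h : V -> R) : Cinf h -> Creg k0 h.
Proof.
move=> ch; have := (ch k0).1; rewrite /ipart.
have -> : Num.truncn (k0%:R : R) = k0 by apply: truncn_def; rewrite lexx ltr_nat ltnSn.
by [].
Qed.

Lemma K_compact : (forall j, compact_d (distC m) (Kj j)) -> compact_d (distD m) KK.
Proof.
move=> cKj; apply: SC_D; first exact: K_DS.
move=> ps Kps.
have PK : forall j k, Kj j (P j (ps k)) by move=> j k; exact: K_comp.
have claim : forall l, (l <= n)%N -> exists s : nat -> nat,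
    (forall k, s k < s k.+1)%N /\ (forall k, k <= s k)%N /\
    forall j : 'I_n, (j < l)%N -> exists g, Kj j g /\
      forall k, (distC m g (P j (ps (s k))) < (k.+1%:R^-1)%:E)%E.
  elim=> [|l IH] hl.
    by exists id; split => //; split.
  have [s [s1 [s2 s3]]] := IH (ltnW hl).
  pose jl := Ordinal hl.
  have [g0 [Kg0 cg0]] := CS_C _ (@Kj_Creg jl) (cKj jl) (fun k => P jl (ps (s k)))
     (fun k => PK jl _).
  have [t [t1 [t2 t3]]] := SUB _ _ _ _ _ cg0.
  exists (s \o t); split; [|split].
  - move=> k /=; apply: smono s1 _ _ (t1 k).
  - move=> k /=; apply: leq_trans (t2 k) _; exact: s2.
  - move=> j; rewrite ltnS leq_eqVlt => /orP[/eqP jE|jlt].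
      have -> : j = jl by apply: val_inj.
      by exists g0; split => // k; exact: t3 k.
    have [g [Kg hg]] := s3 j jlt; exists g; split => // k /=.
    apply: lt_le_trans (hg (t k)) _; rewrite lee_fin; apply: inv_le; exact: t2.
have [s [s1 [s2 s3]]] := claim n (leqnn n).
have hg : forall j : 'I_n, exists g, Kj j g /\
    forall k, (distC m g (P j (ps (s k))) < (k.+1%:R^-1)%:E)%E.
  by move=> j; exact: s3 j (ltn_ord j).
have [g Hg] := choice hg.
pose psi : V -> V := fun x => x + \row_j g j x.
have Ppsi : forall j, P j psi = g j.
  move=> j; apply: funext => x; rewrite /P /comp /dispf /psi addrAC subrr add0r mxE.
  by [].
have DSpsi : DS psi by move=> j; rewrite Ppsi; exact: Kj_Creg _ _ (Hg j).1.
have bnd : forall e : R, 0 < e -> exists N, forall k, (N <= k)%N ->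
    (distD m psi (ps (s k)) < e%:E)%E.
  move=> e e0; have en : 0 < e / n.+1%:R by rewrite divr_gt0 ?ltr0n.
  have [N hN] := invN_lt en.
  exists N => k Nk; rewrite distD_E.
  apply: le_lt_trans (_ : _ <= \sum_(j < n) ((k.+1%:R^-1)%:E))%E _.
    by apply: lee_sum => j _; rewrite Ppsi; exact: ltW ((Hg j).2 k).
  rewrite sumEFin lte_fin sumr_const card_ord -[_ *+ n]mulr_natr.
  apply: le_lt_trans (_ : _ <= k.+1%:R^-1 * n.+1%:R) _.
    by apply: ler_wpM2l; [rewrite invr_ge0 ler0n | rewrite ler_nat].
  have nz : n.+1%:R != 0 :> R by rewrite pnatr_eq0.
  rewrite -(divfK nz e) ltr_pM2r ?ltr0n //; exact: hN.
have bnd' : forall e : R, 0 < e -> exists N, forall k, (N <= k)%N ->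
    (distD m (ps (s k)) psi < e%:E)%E.
  move=> e e0; have [N hN] := bnd e e0; exists N => k Nk.
  by rewrite dD_sym //; [exact: hN | exact: K_DS (Kps _)].
have clpsi : forall e : R, 0 < e -> exists c, (distD m (phc c) psi < e%:E)%E.
  move=> e e0; have e20 : 0 < e / 2 by rewrite divr_gt0.
  have [N1 h1] := bnd' _ e20.
  have [_ [[c _ <-] hc]] := (Kps (s N1)).2 _ e20.
  exists c; rewrite [e]splitr.
  apply: le_lt_trans (dD_tri _ _ _ (DS_phic c) (K_DS _ (Kps (s N1))) DSpsi) _.
  by rewrite EFinD; apply: lteD => //; exact: h1.
exists psi; split.
  split; last first.
    move=> e e0; have [c hc] := clpsi e e0; exists (phc c); split => //.
    by exists c.
  split; last exact: DET.
  move=> j; change (cb m (P j psi)); rewrite Ppsi.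
  split; first exact: (Hg j).1.1.
  move=> e e0; have e20 : 0 < e / 2 by rewrite divr_gt0.
  have [_ [[b _ <-] hb]] := (Hg j).1.2 _ e20.
  have cbt : cb m (fun x => P j phi (x + b)) by apply: cb_tr; exact: (hphi.1 j).
  have [h [Ch hh]] := cbt.2 _ e20.
  exists h; split => //; rewrite [e]splitr.
  apply: le_lt_trans (dC_tri _ _ _ (Kj_Creg _ _ (Hg j).1) cbt.1.1 (Cinf_Creg _ Ch)) _.
  rewrite EFinD; apply: lteD => //.
  by rewrite dC_sym //; [exact: Kj_Creg _ _ (Hg j).1 | exact: cbt.1.1].
move=> e e0 N; have [N1 h1] := bnd e e0; exists (s (maxn N N1)); split.
  by apply: leq_trans (s2 _); rewrite leq_maxl.
by apply: h1; rewrite leq_maxr.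
Qed.

Lemma closure_Diffap : (forall j, compact_d (distC m) (Kj j)) -> KK `<=` Diffap m.
Proof.
move=> cKj psi Kpsi; have [dpsi clpsi] := Kpsi; split; last exact: dpsi.2.
move=> j; change (Cap m (P j psi)); split; first exact: (dpsi.1 j).1.
have Cbpsi : Cb m (P j psi) := (dpsi.1 j).1.
split.
  by move=> _ [b _ <-]; exact: Cb_tr.
apply: SC_C; first by move=> a [[h _] _].
move=> a Aa.
have aK : forall k, Kj j (a k).
  move=> k; split; first exact: (Aa k).1.
  move=> e e0; have e20 : 0 < e / 2 by rewrite divr_gt0.
  have [_ [[b _ <-] hb]] := (Aa k).2 _ e20.
  have [_ [[c _ <-] hc]] := clpsi _ e20.
  exists (fun x => P j phi (x + (b + c))); split; first by exists (b + c).
  rewrite [e]splitr.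
  have C1 : Creg k0 (fun x => P j phi (x + (b + c))) by apply: Creg_tr; exact: (hphi.1 j).1.1.
  have C2 : Creg k0 (fun x => P j psi (x + b)) by apply: Creg_tr; exact: Cbpsi.1.
  apply: le_lt_trans (dC_tri _ _ _ C1 C2 (Aa k).1.1) _.
  rewrite EFinD; apply: lteD => //.
  have -> : (fun x => P j phi (x + (b + c))) = (fun x => (fun y => P j phi (y + c)) (x + b)).
    by apply: funext => x; rewrite addrA.
  have := Cnorm_tr R n m (fun y => P j phi (y + c) - P j psi y) b; rewrite /distC => ->.
change (distC m (fun y => P j phi (y + c)) (P j psi) < (e/2)%:E)%E;   rewrite -P_phic; exact: le_lt_trans (dD_comp _ _ j) hc.
have [y [Ky cy]] := CS_C _ (@Kj_Creg j) (cKj j) a aK.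
exists y; split => //; split; first exact: Ky.1.
move=> e e0; have e20 : 0 < e / 2 by rewrite divr_gt0.
have [k [_ dk]] := cy _ e20 0%N.
have [_ [[b _ <-] hb]] := (Aa k).2 _ e20.
exists (fun x => P j psi (x + b)); split; first by exists b.
rewrite [e]splitr.
have C2 : Creg k0 (fun x => P j psi (x + b)) by apply: Creg_tr; exact: Cbpsi.1.
apply: le_lt_trans (dC_tri _ _ _ C2 (Aa k).1.1 (Kj_Creg _ _ Ky)) _.
rewrite EFinD; apply: lteD => //.
by rewrite dC_sym //; [exact: (Aa k).1.1 | exact: Kj_Creg _ _ Ky].
Qed.

Lemma main_sec :
  (Diffap m phi <-> precompact_in (distD m) (diffb m) (Sphi phi)) /\
  (precompact_in (distD m) (diffb m) (Sphi phi) ->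
     Sphi phi `<=` Diffap m /\
     closure_in (distD m) (diffb m) (Sphi phi) `<=` Diffap m).
Proof.
have iff1 : Diffap m phi <-> precompact_in (distD m) (diffb m) (Sphi phi).
  split.
    move=> [hc hd]; split; first exact: Sphi_diffb.
    by apply: K_compact => j; exact: (hc j).2.2.
  move=> [hS cK]; split; last exact: hphi.2.
  move=> j; split; first exact: (hphi.1 j).1.
  split; first by move=> _ [b _ <-]; apply: Cb_tr; exact: (hphi.1 j).1.
  exact: Kj_compact.
split => // pc; have dphi := iff1.2 pc; split.
  by move=> _ [c _ <-]; exact: Diffap_tr.
by apply: closure_Diffap => j; exact: (dphi.1 j).2.2.
Qed.

End Main.


Theorem lemma3p2 (R : realType) (n : nat) (m : R) (phi : 'rV[R]_n -> 'rV[R]_n) :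
  1 <= m -> diffb m phi ->
  (Diffap m phi <-> precompact_in (@distD R n m) (diffb m) (Sphi phi)) /\
  (precompact_in (@distD R n m) (diffb m) (Sphi phi) ->
     Sphi phi `<=` Diffap m /\
     closure_in (@distD R n m) (diffb m) (Sphi phi) `<=` Diffap m).
Proof. move=> m1 hphi; exact: (@main_sec R n m m1 phi hphi). Qed.
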